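(* For $\beta=\beta(f_0)$, $f_0>1$, let $\varepsilon(\beta)=\beta^2-\log(4\beta^2)-f_0$. Then $\varepsilon(\beta)=O(\beta^{-2})$ as $\beta\to\infty$.
   Context: Let $f(\phi)=e^\phi-\phi$; for $f_0\ge1$ let $\phi_*(f_0)\le0\le\phi^*(f_0)$ be the two solutions of $f(\phi)=f_0$, and $\beta(f_0)=\frac12\int_{\phi_*(f_0)}^{\phi^*(f_0)}\frac{d\phi}{\sqrt{f_0-f(\phi)}}$. The map $f_0\mapsto\beta(f_0)$ is a smooth increasing bijection from $(1,\infty)$ onto $(\pi/\sqrt2,\infty)$, so $\varepsilon$ is a function of $\beta$. *)

(* Defs.v *)
From Stdlib Require Import Reals ClassicalEpsilon.
From Coquelicot Require Import Coquelicot.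
Open Scope R_scope.

Definition f (phi : R) : R := exp phi - phi.

Definition phi_lo (f0 : R) : R :=
  epsilon (inhabits 0) (fun p => p <= 0 /\ f p = f0).

Definition phi_hi (f0 : R) : R :=
  epsilon (inhabits 0) (fun p => 0 <= p /\ f p = f0).

Definition beta (f0 : R) : R :=
  / 2 * RInt_gen (fun phi => / sqrt (f0 - f phi))
                 (at_right (phi_lo f0)) (at_left (phi_hi f0)).

Definition eps_of (f0 : R) : R :=
  beta f0 ^ 2 - ln (4 * beta f0 ^ 2) - f0.

(* Main.v *)
Require Import Defs.
From Stdlib Require Import Reals Lra Psatz.
From Coquelicot Require Import Coquelicot.
From Stdlib Require Import ClassicalEpsilon.
Open Scope R_scope.

Lemma exp_mono' : forall x y, x <= y -> exp x <= exp y.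
Proof. intros x y [H|H]. left; apply exp_increasing; auto. subst; lra. Qed.

Lemma exp_poly : forall x, 0 <= x -> x ^ 5 / 3125 <= exp x.
Proof.
  intros x Hx.
  assert (E : exp x = exp (x/5) ^ 5).
  { simpl. rewrite Rmult_1_r, <- !exp_plus. f_equal. field. }
  rewrite E. pose proof (exp_ineq1_le (x/5)).
  apply Rle_trans with ((1 + x/5) ^ 5).
  - apply Rle_trans with ((x/5)^5).
    + apply Req_le. field.
    + apply pow_incr. lra.
  - apply pow_incr. lra.
Qed.

Lemma asym_facts : forall p, 1000 <= p ->
  let S := exp p in
  p ^ 4 / 4 <= S /\ 4 * S ^ 2 * exp (- (S - p) / 2) <= 1 /\
  8 * S ^ 3 * exp (1 - (S - p)) <= 1.
Proof.
  intros p Hp S.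
  assert (H1 : p ^ 4 / 4 <= S).
  { unfold S. eapply Rle_trans; [|apply exp_poly; lra].
    assert (p ^ 5 = p * p ^ 4) by ring. rewrite H.
    assert (0 <= p ^ 4) by (apply pow_le; lra). nra. }
  assert (Hp4 : 1000 ^ 4 <= p ^ 4) by (apply pow_incr; lra).
  assert (HS : 250000000000 <= S) by (replace (1000^4) with 1000000000000 in Hp4 by ring; lra).
  assert (Hps : p <= S / 2).
  { assert (8 * p <= p ^ 4).
    { replace (p^4) with (p*(p*(p*p))) by ring.
      assert (1 <= p * p) by nra. assert (8 <= p * (p * p)) by nra. nra. }
    lra. }
  split; [exact H1|split].
  - set (y := (S - p) / 2).
    assert (Hy : S / 4 <= y) by (unfold y; lra).
    assert (Ey : exp (- (S - p) / 2) * exp y = 1).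
    { rewrite <- exp_plus, <- exp_0. f_equal. unfold y. field. }
    pose proof (exp_poly y ltac:(lra)).
    assert ((S/4)^5 <= y^5) by (apply pow_incr; lra).
    assert (4 * S ^ 2 <= exp y).
    { assert (S^5 = S^2 * S^3) by ring.
      assert (4 * 1024 * 3125 <= S^3) by (assert (0 <= S) by lra; nra).
      assert ((S/4)^5 = S^5 / 1024) by (simpl; field).
      assert (0 <= S^2) by nra. nra. }
    pose proof (exp_pos (- (S - p) / 2)). nra.
  - set (y := (S - p) - 1).
    assert (Hy : S / 4 <= y) by (unfold y; lra).
    assert (Ey : exp (1 - (S - p)) * exp y = 1).
    { rewrite <- exp_plus. replace (1 - (S - p) + y) with 0 by (unfold y; ring). apply exp_0. }
    pose proof (exp_poly y ltac:(lra)).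
    assert ((S/4)^5 <= y^5) by (apply pow_incr; lra).
    assert (8 * S ^ 3 <= exp y).
    { assert (S^5 = S^3 * S^2) by ring.
      assert (8 * 1024 * 3125 <= S^2) by (assert (0 <= S) by lra; nra).
      assert ((S/4)^5 = S^5 / 1024) by (simpl; field).
      assert (0 <= S^3) by (assert (0 <= S) by lra; nra). nra. }
    pose proof (exp_pos (1 - (S - p))). nra.
Qed.

Lemma alg1 : forall u v, 0 < u -> 0 < v -> / u + (u * u - v * v) / (2 * u ^ 3) <= / v.
Proof.
  intros u v Hu Hv.
  assert (E : / v - (/ u + (u * u - v * v) / (2 * u ^ 3)) = (u - v)^2 * (2 * u + v) / (2 * u ^ 3 * v)) by (field; lra).
  assert (0 <= (u - v)^2 * (2 * u + v) / (2 * u ^ 3 * v)).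
  { apply Rmult_le_pos. apply Rmult_le_pos; [apply pow2_ge_0|lra].
    left; apply Rinv_0_lt_compat. assert (0 < u^3) by (apply pow_lt; lra). nra. }
  lra.
Qed.

Lemma alg2 : forall u v z, 0 < u -> 0 < v -> 0 <= z <= 1/2 -> v * v = u * u * (1 - z) ->
  / v <= / u * (1 + z / 2 + z * z).
Proof.
  intros u v z Hu Hv Hz Hvv.
  assert (Hp : 1 <= (1 - z) * (1 + z/2 + z*z)^2).
  { assert (H0 : 0 <= 5/4 - 5/4 * z - z * z * z) by nra.
    assert (H1 : (1 - z) * (1 + z/2 + z*z)^2 = 1 + z * z * (5/4 - 5/4 * z - z * z * z)) by field.
    rewrite H1. assert (0 <= z * z * (5/4 - 5/4 * z - z * z * z)) by (apply Rmult_le_pos; nra). lra. }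
  assert (u <= v * (1 + z/2 + z*z)).
  { apply Rsqr_incr_0_var; [|nra]. unfold Rsqr.
    replace (v * (1 + z / 2 + z * z) * (v * (1 + z / 2 + z * z))) with (v * v * (1 + z/2 + z*z)^2) by ring.
    rewrite Hvv. nra. }
  apply (Rmult_le_reg_l v); auto. rewrite Rinv_r by lra.
  apply (Rmult_le_reg_l u); auto.
  replace (u * (v * (/ u * (1 + z / 2 + z * z)))) with (v * (1 + z/2 + z*z)) by (field; lra).
  lra.
Qed.

Lemma alg3 : forall u v, 0 < v -> v <= u -> / v - / u <= (u * u - v * v) / (2 * v ^ 3).
Proof.
  intros u v Hv Hvu.
  assert (E : (u * u - v * v) / (2 * v ^ 3) - (/ v - / u) = (u - v) * (u * (u + v) - 2 * v * v) / (2 * v^3 * u)) by (field; lra).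
  assert (0 <= (u - v) * (u * (u + v) - 2 * v * v) / (2 * v^3 * u)).
  { apply Rmult_le_pos. apply Rmult_le_pos; nra.
    left; apply Rinv_0_lt_compat. assert (0 < v^3) by (apply pow_lt; lra). nra. }
  lra.
Qed.

Lemma alg_low : forall W X sS SS v, 0 < W <= 1 -> 0 <= X -> 0 < sS -> SS = sS * sS ->
  0 < v -> v * v = SS * (W * W) - X ->
  / sS * / W + X / (2 * (SS * sS)) <= / v.
Proof.
  intros W X sS SS v HW HX Hs HSS Hv Hvv.
  set (u := sS * W). assert (Hu : 0 < u) by (unfold u; nra).
  pose proof (alg1 u v Hu Hv).
  assert (E1 : / u = / sS * / W) by (unfold u; field; lra).
  assert (E2 : u * u - v * v = X) by (unfold u; rewrite Hvv, HSS; ring).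
  rewrite E1, E2 in H.
  assert (X / (2 * (SS * sS)) <= X / (2 * u ^ 3)).
  { unfold Rdiv. apply Rmult_le_compat_l; auto. apply Rinv_le_contravar.
    assert (0 < u^3) by (apply pow_lt; lra). lra.
    unfold u. rewrite HSS.
    assert (W^3 <= 1). { replace (W^3) with (W*(W*W)) by ring. assert (W*W <= 1) by nra. nra. }
    replace ((sS * W)^3) with (sS^3 * W^3) by ring.
    assert (0 < sS^3) by (apply pow_lt; lra).
    replace (sS * sS * sS) with (sS^3) by ring. nra. }
  lra.
Qed.

Lemma alg_up : forall W X E sS SS v P, 0 < W <= 1 -> W * W + E = 1 -> 0 <= X -> 0 < sS -> SS = sS * sS ->
  X <= (1 + X) * (W * W) -> X <= P -> 0 < v -> v * v = SS * (W * W) - X -> 2 * (1 + P) <= SS ->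
  / v <= (/ sS + (1 + P)^2 / (SS^2 * sS)) * / W + / (2 * (SS * sS)) * (X + X * E / W + X * E / W^3).
Proof.
  intros W X E sS SS v P HW HWE HX Hs HSS HXW HXP Hv Hvv HP.
  set (u := sS * W). assert (Hu : 0 < u) by (unfold u; nra).
  set (z := X / (SS * (W * W))).
  assert (HSS0 : 0 < SS) by nra.
  assert (HW2 : 0 < W * W) by nra.
  assert (Hz : 0 <= z <= 1/2).
  { unfold z. split. apply Rmult_le_pos; auto. left; apply Rinv_0_lt_compat; nra.
    apply (Rmult_le_reg_r (SS * (W * W))). nra. unfold Rdiv. rewrite Rmult_assoc, Rinv_l by nra.
    assert (X * (1 + P) <= (1 + X) * (W * W) * (1 + P)) by nra.
    assert ((1+X) * (W*W) <= (1 + P) * (W * W)) by nra.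
    nra. }
  assert (Hvz : v * v = u * u * (1 - z)).
  { rewrite Hvv. unfold u, z. rewrite HSS. field. nra. }
  pose proof (alg2 u v z Hu Hv Hz Hvz).
  eapply Rle_trans; [exact H|].
  assert (Ex : / u * (1 + z / 2 + z * z) = / sS * / W + X / (2 * (SS * sS)) * / W^3 + X^2 / (SS^2 * sS) * / W^5).
  { unfold u, z. rewrite HSS. field. split; nra. }
  rewrite Ex.
  assert (T1 : X * / W ^ 3 <= X + X * E / W + X * E / W ^ 3).
  { assert (X * / W^3 = X * / W + X * E / W^3) by (replace E with (1 - W * W) by lra; field; lra).
    assert (X * / W <= X + X * E / W).
    { assert (X * / W - X = X * (1 - W) / W) by (field; nra).
      assert (X * (1 - W) / W <= X * E / W).
      { unfold Rdiv. apply Rmult_le_compat_r. left; apply Rinv_0_lt_compat; lra.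
        apply Rmult_le_compat_l; auto. nra. }
      lra. }
    lra. }
  assert (T2 : X^2 * / W^5 <= (1 + P)^2 * / W).
  { assert (X^2 <= (1+P)^2 * W^4).
    { assert (X <= (1+P) * (W * W)) by nra.
      assert (0 <= X) by lra.
      replace ((1+P)^2 * W^4) with (((1+P) * (W*W))^2) by ring.
      apply pow_incr; lra. }
    assert (X^2 * / W^5 = X^2 / W^4 * / W) by (field; lra).
    rewrite H1. apply Rmult_le_compat_r. left; apply Rinv_0_lt_compat; lra.
    apply (Rmult_le_reg_r (W^4)). apply pow_lt; lra.
    unfold Rdiv. rewrite Rmult_assoc, Rinv_l. lra. apply pow_nonzero; lra. }
  assert (HA : 0 < / (2 * (SS * sS))) by (apply Rinv_0_lt_compat; nra).
  assert (HB : 0 < / (SS^2 * sS)) by (apply Rinv_0_lt_compat; assert (0 < SS^2) by (apply pow_lt; lra); nra).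
  assert (X / (2 * (SS * sS)) * / W ^ 3 <= / (2 * (SS * sS)) * (X + X * E / W + X * E / W ^ 3)).
  { unfold Rdiv. rewrite (Rmult_comm X), Rmult_assoc. apply Rmult_le_compat_l; lra. }
  assert (X ^ 2 / (SS ^ 2 * sS) * / W ^ 5 <= (1 + P)^2 / (SS^2 * sS) * / W).
  { unfold Rdiv. replace (X ^ 2 * / (SS ^ 2 * sS) * / W ^ 5) with (/ (SS ^ 2 * sS) * (X^2 * / W^5)) by ring.
    replace ((1 + P) ^ 2 * / (SS ^ 2 * sS) * / W) with (/ (SS ^ 2 * sS) * ((1 + P) ^ 2 * / W)) by ring.
    apply Rmult_le_compat_l; lra. }
  lra.
Qed.

Lemma sqrt_exp : forall sS SS p sa, 0 < sS -> SS = sS * sS -> 0 <= p <= SS / 2 -> 0 <= sa ->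
  sa * sa = SS - p ->
  2 * sS - p / sS - p^2 / (4 * SS * sS) - p^3 / (4 * SS^2 * sS) <= 2 * sa <=
  2 * sS - p / sS - p^2 / (4 * SS * sS).
Proof.
  intros sS SS p sa Hs HSS Hp Hsa Hsa2.
  set (u := p / SS).
  assert (HSS0 : 0 < SS) by nra.
  assert (Hu : 0 <= u <= 1/2).
  { unfold u. split. apply Rmult_le_pos; [lra|left; apply Rinv_0_lt_compat; lra].
    apply (Rmult_le_reg_r SS); auto. unfold Rdiv. rewrite Rmult_assoc, Rinv_l by lra. lra. }
  assert (Hp' : p = u * SS) by (unfold u; field; lra).
  assert (E1 : 2 * sS - p / sS - p^2 / (4 * SS * sS) = 2 * sS * (1 - u/2 - u*u/8)).
  { rewrite Hp', HSS. field. lra. }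
  assert (E2 : 2 * sS - p / sS - p^2 / (4 * SS * sS) - p^3 / (4 * SS^2 * sS) = 2 * sS * (1 - u/2 - u*u/8 - u*u*u/8)).
  { rewrite Hp', HSS. field. lra. }
  rewrite E2, E1.
  assert (Hsa2' : sa * sa = sS * sS * (1 - u)) by (rewrite Hsa2, Hp', HSS; ring).
  split.
  - assert (HP : 0 <= 1 - u/2 - u*u/8 - u*u*u/8) by nra.
    assert ((1 - u/2 - u*u/8 - u*u*u/8)^2 <= 1 - u).
    { assert (H0 : (1 - u/2 - u*u/8 - u*u*u/8)^2 = 1 - u - u*u*u*(1/8 - 9/64 * u - 1/32 * u * u - 1/64 * u*u*u)) by field.
      rewrite H0. assert (0 <= u*u*u*(1/8 - 9/64 * u - 1/32 * u * u - 1/64 * u*u*u)).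
      { apply Rmult_le_pos. assert (0 <= u*u) by nra. nra. nra. }
      lra. }
    assert (sS * (1 - u/2 - u*u/8 - u*u*u/8) <= sa).
    { apply Rsqr_incr_0_var; [|lra]. unfold Rsqr.
      replace (sS * (1 - u / 2 - u * u / 8 - u * u * u / 8) * (sS * (1 - u / 2 - u * u / 8 - u * u * u / 8)))
        with (sS * sS * (1 - u/2 - u*u/8 - u*u*u/8)^2) by ring.
      rewrite Hsa2'. apply Rmult_le_compat_l; nra. }
    lra.
  - assert (HP : 0 <= 1 - u/2 - u*u/8) by nra.
    assert (1 - u <= (1 - u/2 - u*u/8)^2).
    { assert (H0 : (1 - u/2 - u*u/8)^2 = 1 - u + u*u*u/8 + u*u*u*u/64) by field.
      rewrite H0. assert (0 <= u*u*u) by (assert (0 <= u*u) by nra; nra). assert (0 <= u*u*u*u) by nra. lra. }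
    assert (sa <= sS * (1 - u/2 - u*u/8)).
    { apply Rsqr_incr_0_var; [|nra]. unfold Rsqr.
      replace (sS * (1 - u / 2 - u * u / 8) * (sS * (1 - u / 2 - u * u / 8)))
        with (sS * sS * (1 - u/2 - u*u/8)^2) by ring.
      rewrite Hsa2'. apply Rmult_le_compat_l; nra. }
    lra.
Qed.

Lemma ln_le_lin' : forall x, 0 < x -> ln x <= x - 1.
Proof. intros x Hx. pose proof (exp_ineq1_le (ln x)). rewrite exp_ln in H; lra. Qed.

Lemma ln_bounds : forall r, -1/2 <= r -> -2 * Rabs r <= ln (1 + r) <= r.
Proof.
  intros r Hr. split.
  - assert (ln (/ (1 + r)) <= / (1 + r) - 1) by (apply ln_le_lin'; apply Rinv_0_lt_compat; lra).
    rewrite ln_Rinv in H by lra.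
    assert (/ (1 + r) - 1 = - r / (1 + r)) by (field; lra).
    assert (- r / (1 + r) <= 2 * Rabs r).
    { apply (Rmult_le_reg_r (1 + r)); [lra|]. unfold Rdiv. rewrite Rmult_assoc, Rinv_l by lra.
      destruct (Rle_dec 0 r).
      - rewrite Rabs_right by lra. nra.
      - rewrite Rabs_left by lra. nra. }
    lra.
  - pose proof (ln_le_lin' (1 + r)). lra.
Qed.

Lemma fin_alg : forall p SS sS b, 0 < sS -> SS = sS * sS -> SS = exp p -> 1000000 <= SS ->
  sS + ln 2 / sS - 19 / (SS * sS) <= b <= sS + ln 2 / sS + 19 / (SS * sS) ->
  Rabs (b ^ 2 - ln (4 * b ^ 2) - (SS - p)) <= 172 / b ^ 2.
Proof.
  intros p SS sS b Hs HSS Hexp HSSb Hb.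
  set (L := ln 2).
  assert (HL : / 2 < L <= 1) by (split; [apply ln_lt_2|pose proof (ln_le_lin' 2); unfold L; lra]).
  set (eta := b - (sS + L / sS)).
  assert (Heta : Rabs eta <= 19 / (SS * sS)).
  { apply Rabs_le. unfold eta, L in *. lra. }
  assert (HsS : 1000 <= sS) by nra.
  assert (HSSs : 0 < SS * sS) by nra.
  set (D := b ^ 2 - SS - 2 * L).
  assert (HD : D = L * L / SS + 2 * sS * eta + 2 * L * eta / sS + eta * eta).
  { unfold D, eta. rewrite HSS. field. lra. }
  assert (He : - (19 / (SS * sS)) <= eta <= 19 / (SS * sS)).
  { split. pose proof (Rle_abs (-eta)). rewrite Rabs_Ropp in H. lra.
    pose proof (Rle_abs eta). lra. }
  assert (HDb : - (80 / SS) <= D <= 80 / SS).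
  { rewrite HD.
    assert (E1 : 2 * sS * (19 / (SS * sS)) = 38 / SS) by (field; lra).
    assert (E2 : 0 <= L * L / SS <= 1 / SS).
    { split. apply Rmult_le_pos; [nra|left; apply Rinv_0_lt_compat; lra].
      unfold Rdiv. apply Rmult_le_compat_r; [left; apply Rinv_0_lt_compat; lra|nra]. }
    assert (E3 : / (SS * sS) <= / SS * / 1000).
    { rewrite Rinv_mult.
      assert (0 < / SS) by (apply Rinv_0_lt_compat; lra).
      assert (/ sS <= / 1000) by (apply Rinv_le_contravar; lra). nra. }
    assert (E4 : Rabs (2 * L * eta / sS) <= 2 * (19 / (SS * sS))).
    { unfold Rdiv. rewrite !Rabs_mult, Rabs_Rinv by lra. rewrite (Rabs_right 2), (Rabs_right L), (Rabs_right sS) by lra.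
      assert (0 < / sS) by (apply Rinv_0_lt_compat; lra).
      assert (/ sS <= 1) by (rewrite <- Rinv_1; apply Rinv_le_contravar; lra).
      assert (0 <= Rabs eta) by apply Rabs_pos. unfold Rdiv in Heta.
      assert (L * / sS <= 1) by nra. assert (0 <= L * / sS) by nra.
      replace (2 * L * Rabs eta * / sS) with (2 * (L * / sS) * Rabs eta) by ring.
      assert ((L * / sS) * Rabs eta <= Rabs eta) by nra. lra. }
    assert (E5 : eta * eta <= 19 / (SS * sS) * (19 / (SS * sS))).
    { assert (eta * eta = Rabs eta * Rabs eta) by (rewrite <- Rabs_mult; rewrite Rabs_right; [ring|nra]).
      assert (0 <= Rabs eta) by apply Rabs_pos. nra. }
    assert (0 <= eta * eta) by nra.
    assert (0 <= 19 / (SS * sS)) by (apply Rmult_le_pos; [lra|left; apply Rinv_0_lt_compat; lra]).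
    assert (HiS : / SS <= / 1000000) by (apply Rinv_le_contravar; lra).
    assert (19 / (SS * sS) <= 1) by (unfold Rdiv in *; assert (0 < /SS) by (apply Rinv_0_lt_compat; lra); lra).
    pose proof (Rle_abs (2 * L * eta / sS)). pose proof (Rle_abs (- (2 * L * eta / sS))). rewrite Rabs_Ropp in H3.
    assert (2 * sS * eta <= 38 / SS) by nra.
    assert (- (38 / SS) <= 2 * sS * eta) by nra.
    assert (19 / (SS * sS) * (19 / (SS * sS)) <= 19 / (SS * sS)) by nra.
    assert (0 < 1 / SS) by (unfold Rdiv; rewrite Rmult_1_l; apply Rinv_0_lt_compat; lra).
    unfold Rdiv in *. lra. }
  assert (Hb2 : 0 < b ^ 2).
  { assert (0 < 80 / SS) by (apply Rmult_lt_0_compat; [lra|apply Rinv_0_lt_compat; lra]).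
    assert (80 / SS <= 1) by (apply (Rmult_le_reg_r SS); [lra|]; unfold Rdiv; rewrite Rmult_assoc, Rinv_l; lra).
    unfold D in HDb. lra. }
  set (rho := (2 * L + D) / SS).
  assert (Hrho : b ^ 2 = SS * (1 + rho)) by (unfold rho, D; field; lra).
  assert (Hrb : Rabs rho <= 3 / SS).
  { apply Rabs_le. unfold rho.
    assert (80 / SS <= 1/10) by (apply (Rmult_le_reg_r SS); [lra|]; unfold Rdiv; rewrite Rmult_assoc, Rinv_l; lra).
    assert (0 < / SS) by (apply Rinv_0_lt_compat; lra).
    assert (-3 <= 2 * L + D <= 3) by lra.
    unfold Rdiv. split; nra. }
  assert (Hrho2 : -1/2 <= rho).
  { pose proof (Rle_abs (- rho)). rewrite Rabs_Ropp in H.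
    assert (3 / SS <= 1/2) by (apply (Rmult_le_reg_r SS); [lra|]; unfold Rdiv; rewrite Rmult_assoc, Rinv_l; lra). lra. }
  assert (Hln : ln (4 * b ^ 2) = 2 * L + p + ln (1 + rho)).
  { rewrite Hrho. rewrite !ln_mult by (try lra; pose proof (Rle_abs (-rho)); rewrite Rabs_Ropp in H; assert (3/SS <= 1/2) by (apply (Rmult_le_reg_r SS); [lra|]; unfold Rdiv; rewrite Rmult_assoc, Rinv_l; lra); lra).
    replace 4 with (2 * 2) by ring. rewrite ln_mult by lra. rewrite Hexp, ln_exp. unfold L. ring. }
  destruct (ln_bounds rho Hrho2) as [Hl1 Hl2].
  assert (Heps : b ^ 2 - ln (4 * b ^ 2) - (SS - p) = D - ln (1 + rho)).
  { rewrite Hln. unfold D. ring. }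
  rewrite Heps.
  assert (Hb2u : b ^ 2 <= 2 * SS).
  { unfold D in HDb. assert (80 / SS <= 1) by (apply (Rmult_le_reg_r SS); [lra|]; unfold Rdiv; rewrite Rmult_assoc, Rinv_l; lra). lra. }
  assert (86 / SS <= 172 / b ^ 2).
  { assert (b <> 0) by (intro Hb0; rewrite Hb0 in Hb2; simpl in Hb2; lra).
    unfold Rdiv. apply (Rmult_le_reg_r (SS * b^2)); [nra|].
    replace (86 * / SS * (SS * b ^ 2)) with (86 * b^2) by (field; lra).
    replace (172 * / b ^ 2 * (SS * b ^ 2)) with (172 * SS) by (field; lra). lra. }
  apply Rabs_le.
  pose proof (Rle_abs rho). pose proof (Rle_abs (-rho)). rewrite Rabs_Ropp in H1.
  assert (0 < 1 / SS) by (unfold Rdiv; rewrite Rmult_1_l; apply Rinv_0_lt_compat; lra).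
  unfold Rdiv in *. lra.
Qed.

Lemma exp_ge1 : forall x, 1 + x <= exp x.
Proof. exact exp_ineq1_le. Qed.

Lemma ln_le_lin : forall x, 0 < x -> ln x <= x - 1.
Proof. intros x Hx. pose proof (exp_ge1 (ln x)). rewrite exp_ln in H; lra. Qed.

Lemma exp_mono : forall x y, x <= y -> exp x <= exp y.
Proof. intros x y [H|H]. left; apply exp_increasing; auto. subst; lra. Qed.

Lemma poly_facts : forall p, 1000 <= p ->
  2 * (1 + p) <= p^4/4 /\ (1 + p)^2 * (p + 2) <= p^4/4 /\ p^3 <= p^4/4 /\ 8 * p <= p^4/4 /\ 1000000 <= p^4/4.
Proof.
  intros p Hp.
  assert (H2 : 1000000 <= p * p) by nra.
  assert (H3 : 1000 * (p * p) <= p * (p * p)) by nra.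
  assert (H4 : 1000 * (p * (p * p)) <= p * (p * (p * p))) by nra.
  replace (p^4) with (p * (p * (p * p))) by ring.
  replace (p^3) with (p * (p * p)) by ring.
  replace ((1+p)^2 * (p+2)) with (p * (p * p) + 4 * (p * p) + 5 * p + 2) by ring.
  repeat split; nra.
Qed.

Section Main.
Variables a p q : R.
Hypothesis Ha : 1 < a.
Hypothesis Hp : 0 < p.
Hypothesis Hq : q < 0.
Hypothesis Hfp : exp p - p = a.
Hypothesis Hfq : exp q - q = a.

Definition g (t : R) := / sqrt (a - Defs.f t).

Lemma Gneg : forall t, q <= t -> (t - q) * (1 - exp t) <= a - Defs.f t.
Proof.
  intros t Ht. unfold Defs.f.
  assert (E: exp q = exp t * exp (q - t)) by (rewrite <- exp_plus; f_equal; ring).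
  pose proof (exp_ge1 (q - t)). pose proof (exp_pos t).
  rewrite <- Hfq, E. nra.
Qed.

Lemma Gpos : forall t, t <= p -> (p - t) * (exp t - 1) <= a - Defs.f t.
Proof.
  intros t Ht. unfold Defs.f.
  assert (E: exp p = exp t * exp (p - t)) by (rewrite <- exp_plus; f_equal; ring).
  pose proof (exp_ge1 (p - t)). pose proof (exp_pos t).
  rewrite <- Hfp, E. nra.
Qed.

Lemma G_pos : forall t, q < t < p -> 0 < a - Defs.f t.
Proof.
  intros t [H1 H2].
  destruct (Rlt_le_dec t 0) as [Hn|Hn].
  - pose proof (Gneg t (Rlt_le _ _ H1)).
    assert (exp t < 1) by (rewrite <- exp_0; apply exp_increasing; lra). nra.
  - destruct (Req_dec t 0) as [->|Hz].
    + unfold Defs.f. rewrite exp_0. lra.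
    + pose proof (Gpos t (Rlt_le _ _ H2)).
      assert (1 < exp t) by (rewrite <- exp_0; apply exp_increasing; lra). nra.
Qed.

Lemma g_nonneg : forall t, 0 <= g t.
Proof.
  intros t. unfold g. destruct (Req_dec (sqrt (a - Defs.f t)) 0) as [E|E].
  - rewrite E, Rinv_0; lra.
  - left. apply Rinv_0_lt_compat. pose proof (sqrt_pos (a - Defs.f t)). lra.
Qed.

Lemma g_derive : forall t, q < t < p -> ex_derive g t.
Proof.
  intros t Ht. pose proof (G_pos t Ht). unfold g, Defs.f in *.
  auto_derive. split; [lra|]. split; [|exact I].
  apply Rgt_not_eq, sqrt_lt_R0; lra.
Qed.

Lemma g_cont : forall t, q < t < p -> continuous g t.
Proof. intros t Ht. apply (@ex_derive_continuous R_AbsRing R_NormedModule), g_derive, Ht. Qed.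

Lemma g_exRInt : forall x y, q < x -> x <= y -> y < p -> ex_RInt g x y.
Proof.
  intros x y H1 H2 H3. apply (@ex_RInt_continuous R_CompleteNormedModule).
  intros z Hz. rewrite Rmin_left in Hz by lra. rewrite Rmax_right in Hz by lra.
  apply g_cont; lra.
Qed.

Lemma g_exRInt' : forall x y, q < x < p -> q < y < p -> ex_RInt g x y.
Proof.
  intros x y H1 H2. destruct (Rle_dec x y).
  - apply g_exRInt; lra.
  - apply (@ex_RInt_swap R_CompleteNormedModule), g_exRInt; lra.
Qed.

Lemma RInt_g_deriv : forall x t, q < x < p -> q < t < p ->
  is_derive (fun u => RInt g x u) t (g t).
Proof.
  intros x t Hx Ht. apply (@is_derive_RInt R_NormedModule g (fun u => RInt g x u) x t).
  - assert (Hd : 0 < Rmin (t - q) (p - t)) by (apply Rmin_pos; lra).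
    exists (mkposreal _ Hd). intros b Hb.
    change (Rabs (b - t) < Rmin (t - q) (p - t)) in Hb.
    apply Rabs_lt_between' in Hb.
    pose proof (Rmin_l (t - q) (p - t)). pose proof (Rmin_r (t - q) (p - t)).
    apply (@RInt_correct R_CompleteNormedModule), g_exRInt'; lra.
  - apply g_cont; lra.
Qed.

Lemma cmp_gen : forall x y (H h : R -> R), q < x -> x <= y -> y < p ->
  (forall t, x <= t <= y -> is_derive H t (h t)) ->
  (forall t, x <= t <= y -> 0 <= h t - g t) ->
  H x <= H y - RInt g x y.
Proof.
  intros x y H h H1 H2 H3 HD Hle.
  set (D := fun u => H u - RInt g x u).
  assert (HDD : forall t, x <= t <= y -> is_derive D t (h t - g t)).
  { intros t Ht. unfold D. apply (@is_derive_minus R_AbsRing R_NormedModule). apply HD, Ht.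
    apply RInt_g_deriv; lra. }
  destruct (MVT_gen D x y (fun t => h t - g t)) as [c [Hc Heq]].
  - intros t Ht. rewrite Rmin_left in Ht by lra. rewrite Rmax_right in Ht by lra.
    apply HDD; lra.
  - intros t Ht. rewrite Rmin_left in Ht by lra. rewrite Rmax_right in Ht by lra.
    apply continuity_pt_filterlim. apply (@ex_derive_continuous R_AbsRing R_NormedModule).
    eexists. apply HDD; lra.
  - rewrite Rmin_left in Hc by lra. rewrite Rmax_right in Hc by lra.
    unfold D in Heq. rewrite RInt_point in Heq.
    assert (0 <= (h c - g c) * (y - x)) by (apply Rmult_le_pos; [apply Hle; lra|lra]).
    assert (Hz : forall z : R, z - zero = z) by (intros; unfold zero; simpl; ring). rewrite Hz in Heq. lra.
Qed.

Lemma cmp_up : forall x y (H h : R -> R), q < x -> x <= y -> y < p ->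
  (forall t, x <= t <= y -> is_derive H t (h t)) ->
  (forall t, x <= t <= y -> g t <= h t) ->
  RInt g x y <= H y - H x.
Proof.
  intros x y H h H1 H2 H3 HD Hle.
  assert (K := cmp_gen x y H h H1 H2 H3 HD).
  assert (forall t, x <= t <= y -> 0 <= h t - g t).
  { intros t Ht. pose proof (Hle t Ht). lra. }
  specialize (K H0). lra.
Qed.

Lemma cmp_low : forall x y (H h : R -> R), q < x -> x <= y -> y < p ->
  (forall t, x <= t <= y -> is_derive H t (h t)) ->
  (forall t, x <= t <= y -> h t <= g t) ->
  H y - H x <= RInt g x y.
Proof.
  intros x y H h H1 H2 H3 HD Hle.
  assert (K := cmp_gen x y (fun u => 2 * RInt g x u - H u) (fun u => 2 * g u - h u) H1 H2 H3).
  assert (HR : forall t, x <= t <= y -> is_derive (fun u => 2 * RInt g x u - H u) t (2 * g t - h t)).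
  { intros t Ht. apply (@is_derive_minus R_AbsRing R_NormedModule); [|apply HD, Ht].
    apply (is_derive_scal (fun u => RInt g x u)).
    apply RInt_g_deriv; lra. }
  specialize (K HR).
  assert (forall t, x <= t <= y -> 0 <= 2 * g t - h t - g t).
  { intros t Ht. pose proof (Hle t Ht). lra. }
  specialize (K H0). simpl in K. rewrite RInt_point in K.
  change zero with 0 in K. lra.
Qed.


Lemma RInt_g_nonneg : forall x y, q < x -> x <= y -> y < p -> 0 <= RInt g x y.
Proof.
  intros x y H1 H2 H3. apply RInt_ge_0; auto. apply g_exRInt; auto.
  intros; apply g_nonneg.
Qed.

Lemma RInt_g_split : forall x y z, q < x -> x <= y -> y <= z -> z < p ->
  RInt g x z = RInt g x y + RInt g y z.
Proof.
  intros x y z H1 H2 H3 H4. symmetry.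
  apply (@RInt_Chasles R_CompleteNormedModule); apply g_exRInt; lra.
Qed.

Lemma RInt_g_mono : forall x' x y y', q < x' -> x' <= x -> x <= y -> y <= y' -> y' < p ->
  RInt g x y <= RInt g x' y'.
Proof.
  intros x' x y y' H1 H2 H3 H4 H5.
  rewrite (RInt_g_split x' x y') by lra. rewrite (RInt_g_split x y y') by lra.
  pose proof (RInt_g_nonneg x' x). pose proof (RInt_g_nonneg y y'). lra.
Qed.

Lemma improper : (exists M, forall x y, q < x -> x <= y -> y < p -> RInt g x y <= M) ->
  exists l, is_RInt_gen g (at_right q) (at_left p) l /\
    (forall x y, q < x -> x <= y -> y < p -> RInt g x y <= l) /\
    (forall U, (forall x y, q < x -> x <= y -> y < p -> RInt g x y <= U) -> l <= U).
Proof.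
  intros [M HM].
  set (E := fun v => exists x y, q < x /\ x <= y /\ y < p /\ v = RInt g x y).
  destruct (completeness E) as [l [Hub Hlub]].
  - exists M. intros v (x & y & H1 & H2 & H3 & ->). apply HM; auto.
  - exists (RInt g (q/2) (q/2)). exists (q/2), (q/2). repeat split; lra.
  - assert (Hup : forall x y, q < x -> x <= y -> y < p -> RInt g x y <= l).
    { intros x y H1 H2 H3. apply Hub. exists x, y. repeat split; auto. }
    exists l. split; [|split].
    + intros P [eps Heps].
      assert (Hex : exists x0 y0, q < x0 /\ x0 <= y0 /\ y0 < p /\ l - eps < RInt g x0 y0).
      { apply Classical_Prop.NNPP. intros Hn.
        assert (l <= l - eps).
        { apply Hlub. intros v (x & y & H1 & H2 & H3 & ->).
          apply Rnot_lt_le. intros Hlt. apply Hn. exists x, y. repeat split; auto. }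
        pose proof (cond_pos eps). lra. }
      destruct Hex as (x0 & y0 & H1 & H2 & H3 & H4).
      apply (Filter_prod _ _ _ (fun x => q < x <= x0) (fun y => y0 <= y < p)).
      * assert (Hd : 0 < x0 - q) by lra. exists (mkposreal _ Hd).
        intros u Hu Hqu. change (Rabs (u - q) < x0 - q) in Hu.
        apply Rabs_lt_between' in Hu. lra.
      * assert (Hd : 0 < p - y0) by lra. exists (mkposreal _ Hd).
        intros u Hu Hqu. change (Rabs (u - p) < p - y0) in Hu.
        apply Rabs_lt_between' in Hu. lra.
      * intros x y [Hx1 Hx2] [Hy1 Hy2]. simpl.
        exists (RInt g x y). split.
        -- apply (@RInt_correct R_CompleteNormedModule), g_exRInt; lra.
        -- apply Heps. change (Rabs (RInt g x y - l) < eps).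
           pose proof (Hup x y ltac:(lra) ltac:(lra) ltac:(lra)).
           pose proof (RInt_g_mono x0 x0 y0 y0) as _.
           pose proof (RInt_g_mono x x0 y0 y ltac:(lra) ltac:(lra) ltac:(lra) ltac:(lra) ltac:(lra)).
           apply Rabs_lt_between'. lra.
    + exact Hup.
    + intros U HU. apply Hlub. intros v (x & y & H1 & H2 & H3 & ->). apply HU; auto.
Qed.

Lemma beta_val : phi_lo a = q -> phi_hi a = p -> (exists M, forall x y, q < x -> x <= y -> y < p -> RInt g x y <= M) ->
  exists l, beta a = / 2 * l /\
    (forall x y, q < x -> x <= y -> y < p -> RInt g x y <= l) /\
    (forall U, (forall x y, q < x -> x <= y -> y < p -> RInt g x y <= U) -> l <= U).
Proof.
  intros Hlo Hhi HM. destruct (improper HM) as (l & H1 & H2 & H3).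
  exists l. split; auto.
  unfold beta. rewrite Hlo, Hhi. f_equal.
  apply (is_RInt_gen_unique g l H1).
Qed.


Lemma inv_sqrt_le : forall A B, 0 < A -> A <= B -> / sqrt B <= / sqrt A.
Proof. intros. apply Rinv_le_contravar. apply sqrt_lt_R0; auto. apply sqrt_le_1_alt; auto. Qed.

Lemma g_le_of : forall t L, 0 < L -> L <= a - Defs.f t -> g t <= / sqrt L.
Proof. intros. unfold g. apply inv_sqrt_le; auto. Qed.

Lemma g_ge_of : forall t L, 0 < a - Defs.f t -> a - Defs.f t <= L -> / sqrt L <= g t.
Proof. intros. unfold g. apply inv_sqrt_le; auto. Qed.

Lemma q_ge : - a < q.
Proof. pose proof (exp_pos q). lra. Qed.

Lemma der_sqrt_lin : forall c K t, c < t -> 0 < K ->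
  is_derive (fun u => 2 * sqrt (u - c) / K) t (/ sqrt ((t - c) * (K * K))).
Proof.
  intros c K t Ht HK. auto_derive; [lra|]. change (t + - c) with (t - c).
  rewrite sqrt_mult by nra. rewrite sqrt_square by lra.
  assert (0 < sqrt (t - c)) by (apply sqrt_lt_R0; lra). field. lra.
Qed.

Lemma der_sqrt_lin' : forall c K t, t < c -> 0 < K ->
  is_derive (fun u => - (2 * sqrt (c - u) / K)) t (/ sqrt ((c - t) * (K * K))).
Proof.
  intros c K t Ht HK. auto_derive; [lra|]. change (c + - t) with (c - t).
  rewrite sqrt_mult by nra. rewrite sqrt_square by lra.
  assert (0 < sqrt (c - t)) by (apply sqrt_lt_R0; lra). field. lra.
Qed.

Lemma der_lin : forall K t, is_derive (fun u => u * K) t K.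
Proof. intros. auto_derive; auto. ring. Qed.

Lemma crude : forall x y, q < x -> x <= y -> y < p -> RInt g x y <= 3 + 3 * sqrt (1 + a).
Proof.
  intros x y H1 H2 H3.
  set (x' := Rmin x (q/2)). set (y' := Rmax y (p/2)).
  assert (Hx' : q < x' <= q/2) by (unfold x'; split; [apply Rmin_glb_lt; lra|apply Rmin_r]).
  assert (Hy' : p/2 <= y' < p) by (unfold y'; split; [apply Rmax_r|apply Rmax_lub_lt; lra]).
  assert (x' <= x) by apply Rmin_l. assert (y <= y') by apply Rmax_l.
  apply Rle_trans with (RInt g x' y'); [apply RInt_g_mono; lra|].
  rewrite (RInt_g_split x' (q/2) y') by lra.
  rewrite (RInt_g_split (q/2) 0 y') by lra.
  rewrite (RInt_g_split 0 (p/2) y') by lra.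
  set (u := - q / 2). set (c := 1 - exp (q/2)).
  assert (Hu : 0 < u) by (unfold u; lra).
  assert (Hc1 : exp (q/2) < 1) by (rewrite <- exp_0; apply exp_increasing; lra).
  assert (Hc : 0 < c) by (unfold c; lra).
  assert (Huc : u <= (1 + u) * c).
  { unfold c, u. pose proof (exp_ge1 (-q/2)).
    assert (exp (q/2) * exp (-q/2) = 1) by (rewrite <- exp_plus, <- exp_0; f_equal; field).
    pose proof (exp_pos (q/2)). nra. }
  set (sc := sqrt c). assert (Hsc : 0 < sc) by (apply sqrt_lt_R0; auto).
  assert (Hsc2 : sc * sc = c) by (apply sqrt_sqrt; lra).
  set (su := sqrt u). assert (Hsu : 0 < su) by (apply sqrt_lt_R0; auto).
  assert (Hsu2 : su * su = u) by (apply sqrt_sqrt; lra).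
  set (sa := sqrt (1 + a)). assert (Hsa : 0 < sa) by (apply sqrt_lt_R0; lra).
  assert (Hsa2 : sa * sa = 1 + a) by (apply sqrt_sqrt; lra).
  pose proof q_ge.
  assert (Hsua : su <= sc * sa).
  { assert (Hua : u <= (1 + a) * c) by (unfold u in *; nra).
    apply Rsqr_incr_0_var; [|nra]. unfold Rsqr.
    replace (sc * sa * (sc * sa)) with ((sc * sc) * (sa * sa)) by ring.
    rewrite Hsc2, Hsa2, Hsu2. lra. }
  assert (P1 : RInt g x' (q/2) <= 2 * su / sc).
  { eapply Rle_trans.
    - apply (cmp_up x' (q/2) (fun t => 2 * sqrt (t - q) / sc) (fun t => / sqrt ((t - q) * (sc * sc))));
        try lra.
      + intros t Ht. apply der_sqrt_lin; lra.
      + intros t Ht. apply g_le_of. rewrite Hsc2; nra.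
        rewrite Hsc2. eapply Rle_trans; [|apply Gneg; lra].
        apply Rmult_le_compat_l; [lra|]. unfold c.
        assert (exp t <= exp (q/2)) by (apply exp_mono; lra). lra.
    - replace (q/2 - q) with u by (unfold u; field). fold su.
      assert (0 <= 2 * sqrt (x' - q) / sc) by (apply Rmult_le_pos; [pose proof (sqrt_pos (x'-q)); lra|left; apply Rinv_0_lt_compat; lra]).
      lra. }
  assert (P2 : RInt g (q/2) 0 <= su / sc).
  { eapply Rle_trans.
    - apply (cmp_up (q/2) 0 (fun t => t * / sqrt (u * c)) (fun t => / sqrt (u * c))); try lra.
      + intros t Ht. apply der_lin.
      + intros t Ht. apply g_le_of; [nra|].
        assert (HG : a - Defs.f (q/2) <= a - Defs.f t).
        { unfold Defs.f.
          assert (E: exp (q/2) = exp t * exp (q/2 - t)) by (rewrite <- exp_plus; f_equal; ring).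
          pose proof (exp_ge1 (q/2 - t)). pose proof (exp_pos t).
          assert (exp t <= 1) by (rewrite <- exp_0; apply exp_mono; lra). nra. }
        eapply Rle_trans; [|exact HG]. eapply Rle_trans; [|apply Gneg; lra].
        replace (q/2 - q) with u by (unfold u; field). unfold c. nra.
    - rewrite sqrt_mult by lra. fold su sc. apply Req_le. replace (q/2) with (-(su*su)) by (rewrite Hsu2; unfold u; field). field. lra. }
  assert (P3 : RInt g 0 (p/2) <= 1).
  { eapply Rle_trans.
    - apply (cmp_up 0 (p/2) (fun t => t * / sqrt ((p/2) * (p/2))) (fun t => / sqrt ((p/2) * (p/2)))); try lra.
      + intros t Ht. apply der_lin.
      + intros t Ht. apply g_le_of; [nra|].
        assert (HG : a - Defs.f (p/2) <= a - Defs.f t).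
        { unfold Defs.f.
          assert (E: exp (p/2) = exp t * exp (p/2 - t)) by (rewrite <- exp_plus; f_equal; ring).
          pose proof (exp_ge1 (p/2 - t)). pose proof (exp_pos t).
          assert (1 <= exp t) by (rewrite <- exp_0; apply exp_mono; lra). nra. }
        eapply Rle_trans; [|exact HG]. eapply Rle_trans; [|apply Gpos; lra].
        pose proof (exp_ge1 (p/2)). nra.
    - rewrite sqrt_square by lra. apply Req_le. field. lra. }
  assert (P4 : RInt g (p/2) y' <= 2).
  { set (sp := sqrt (p/2)). assert (Hsp : 0 < sp) by (apply sqrt_lt_R0; lra).
    assert (Hsp2 : sp * sp = p/2) by (apply sqrt_sqrt; lra).
    eapply Rle_trans.
    - apply (cmp_up (p/2) y' (fun t => - (2 * sqrt (p - t) / sp)) (fun t => / sqrt ((p - t) * (sp * sp)))); try lra.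
      + intros t Ht. apply der_sqrt_lin'; lra.
      + intros t Ht. apply g_le_of; [nra|].
        eapply Rle_trans; [|apply Gpos; lra]. rewrite Hsp2.
        pose proof (exp_ge1 t). nra.
    - replace (p - p/2) with (p/2) by field. fold sp.
      assert (0 <= 2 * sqrt (p - y') / sp) by (apply Rmult_le_pos; [pose proof (sqrt_pos (p-y')); lra|left; apply Rinv_0_lt_compat; lra]).
      apply Rle_trans with (2 * sp / sp); [lra|]. apply Req_le; field; lra. }
  assert (su / sc <= sa).
  { apply (Rmult_le_reg_r sc); auto. unfold Rdiv. rewrite Rmult_assoc, Rinv_l by lra. lra. }
  unfold Rdiv in *. lra.
Qed.


Definition SS := exp p.
Definition sS := sqrt SS.
Definition w t := sqrt (1 - exp (t - p)).
Definition FF t := ln (1 - w t) - ln (1 + w t).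
Definition c1 := / sS + (1 + p)^2 / (SS^2 * sS).
Definition Hl t := / sS * FF t - (p - t)^2 / (4 * (SS * sS)).
Definition hl t := / sS * / w t + (p - t) / (2 * (SS * sS)).
Definition Hu t := c1 * FF t + / (2 * (SS * sS)) * (- (p - t)^2 / 2 - 2 * w t * (p - t) - 4 * w t + 2 * (p - t) / w t).
Definition hu t := c1 * / w t + / (2 * (SS * sS)) * ((p - t) + (p - t) * exp (t - p) / w t + (p - t) * exp (t - p) / w t ^ 3).

Lemma SS_pos : 0 < SS.
Proof. unfold SS; apply exp_pos. Qed.
Lemma sS_pos : 0 < sS.
Proof. apply sqrt_lt_R0, SS_pos. Qed.
Lemma sS2 : SS = sS * sS.
Proof. symmetry; apply sqrt_sqrt; left; apply SS_pos. Qed.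
Lemma a_eq : a = SS - p.
Proof. unfold SS; lra. Qed.

Lemma w_props : forall t, t < p -> 0 < w t < 1 /\ w t * w t = 1 - exp (t - p).
Proof.
  intros t Ht. unfold w.
  assert (exp (t - p) < 1) by (rewrite <- exp_0; apply exp_increasing; lra).
  pose proof (exp_pos (t - p)).
  split; [split|].
  - apply sqrt_lt_R0; lra.
  - apply Rlt_le_trans with (sqrt 1); [apply sqrt_lt_1_alt; split; lra|rewrite sqrt_1; lra].
  - apply sqrt_sqrt; lra.
Qed.

Lemma Hl_der : forall t, t < p -> is_derive Hl t (hl t).
Proof.
  intros t Ht. destruct (w_props t Ht) as [[Hw1 Hw2] Hw3].
  pose proof sS_pos as H1. pose proof SS_pos as H2.
  assert (exp (t - p) < 1) by (rewrite <- exp_0; apply exp_increasing; lra).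
  unfold Hl, hl, FF. unfold w in *. auto_derive.
  - change (t + - p) with (t - p). change (1 + - exp (t - p)) with (1 - exp (t - p)).
    repeat split; lra.
  - change (t + - p) with (t - p). change (1 + - exp (t - p)) with (1 - exp (t - p)).
    set (W := sqrt (1 - exp (t - p))) in *.
    change (1 + - W) with (1 - W).
    replace (exp (t - p)) with (1 - W * W) by lra.
    field. repeat split; lra.
Qed.

Lemma Hu_der : forall t, t < p -> is_derive Hu t (hu t).
Proof.
  intros t Ht. destruct (w_props t Ht) as [[Hw1 Hw2] Hw3].
  pose proof sS_pos as H1. pose proof SS_pos as H2.
  assert (exp (t - p) < 1) by (rewrite <- exp_0; apply exp_increasing; lra).
  unfold Hu, hu, FF. unfold w in *. auto_derive.
  - change (t + - p) with (t - p). change (1 + - exp (t - p)) with (1 - exp (t - p)).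
    repeat split; lra.
  - change (t + - p) with (t - p). change (1 + - exp (t - p)) with (1 - exp (t - p)).
    set (W := sqrt (1 - exp (t - p))) in *.
    change (1 + - W) with (1 - W). change (p + - t) with (p - t).
    replace (exp (t - p)) with (1 - W * W) by lra.
    field. repeat split; lra.
Qed.

Lemma exp_split : forall t, exp t = SS * exp (t - p).
Proof. intros. unfold SS. rewrite <- exp_plus. f_equal. ring. Qed.

Lemma Grepr : forall t, t < p -> a - Defs.f t = SS * (w t * w t) - (p - t).
Proof.
  intros t Ht. destruct (w_props t Ht) as [_ Hw3]. rewrite Hw3.
  unfold Defs.f. rewrite (exp_split t), a_eq. ring.
Qed.

Lemma w_low : forall t, t < p -> p - t <= (1 + (p - t)) * (w t * w t).
Proof.
  intros t Ht. destruct (w_props t Ht) as [_ Hw3]. rewrite Hw3.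
  assert (E : exp (t - p) * exp (p - t) = 1) by (rewrite <- exp_plus; replace (t - p + (p - t)) with 0 by ring; apply exp_0).
  pose proof (exp_ge1 (p - t)). pose proof (exp_pos (t - p)). nra.
Qed.

Lemma SS_big : 1000 <= p -> p ^ 4 / 4 <= SS /\ 4 * SS ^ 2 * exp (- (SS - p) / 2) <= 1 /\
  8 * SS ^ 3 * exp (1 - (SS - p)) <= 1.
Proof. intros H. exact (asym_facts p H). Qed.

Lemma pos_lower_pw : forall t, 0 <= t < p -> hl t <= g t.
Proof.
  intros t Ht. destruct (w_props t (proj2 Ht)) as [[Hw1 Hw2] Hw3].
  assert (HG : 0 < a - Defs.f t) by (apply G_pos; lra).
  unfold hl, g. apply alg_low with (W := w t) (X := p - t) (sS := sS) (SS := SS); try lra.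
  apply sS_pos. apply sS2. apply sqrt_lt_R0; auto.
  rewrite sqrt_sqrt by lra. apply Grepr; lra.
Qed.

Lemma pos_upper_pw : 1000 <= p -> forall t, 0 <= t < p -> g t <= hu t.
Proof.
  intros Hbig t Ht. destruct (w_props t (proj2 Ht)) as [[Hw1 Hw2] Hw3].
  assert (HG : 0 < a - Defs.f t) by (apply G_pos; lra).
  destruct (SS_big Hbig) as [HS _].
  assert (H2p : 2 * (1 + p) <= SS).
  { pose proof (poly_facts p Hbig). lra. }
  unfold hu, g, c1. apply alg_up; try lra.
  apply sS_pos. apply sS2. apply w_low; lra. apply sqrt_lt_R0; auto.
  rewrite sqrt_sqrt by lra. apply Grepr; lra.
Qed.

Lemma pos_low_int : forall y, 0 <= y < p -> Hl y - Hl 0 <= RInt g 0 y.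
Proof.
  intros y Hy. apply cmp_low with (h := hl); try lra.
  - intros t Ht. apply Hl_der; lra.
  - intros t Ht. apply pos_lower_pw; lra.
Qed.

Lemma pos_up_int : 1000 <= p -> forall y, 0 <= y < p -> RInt g 0 y <= Hu y - Hu 0.
Proof.
  intros Hbig y Hy. apply cmp_up with (h := hu); try lra.
  - intros t Ht. apply Hu_der; lra.
  - intros t Ht. apply pos_upper_pw; auto; lra.
Qed.

Lemma FF_nonpos : forall t, t < p -> FF t <= 0.
Proof.
  intros t Ht. destruct (w_props t Ht) as [[Hw1 Hw2] _].
  unfold FF. assert (ln (1 - w t) <= ln (1 + w t)) by (apply ln_le; lra). lra.
Qed.

Lemma FF_low : forall t, t < p -> w t <= 1/2 -> - 4 * w t <= FF t.
Proof.
  intros t Ht Hw. destruct (w_props t Ht) as [[Hw1 Hw2] _].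
  assert (E : ln (1 + w t) - ln (1 - w t) = ln ((1 + w t) * / (1 - w t))).
  { rewrite ln_mult, ln_Rinv; try lra. apply Rinv_0_lt_compat; lra. }
  assert (L : ln ((1 + w t) * / (1 - w t)) <= (1 + w t) * / (1 - w t) - 1).
  { apply ln_le_lin. apply Rmult_lt_0_compat; [lra|apply Rinv_0_lt_compat; lra]. }
  assert (E2 : (1 + w t) * / (1 - w t) - 1 = 2 * w t / (1 - w t)) by (field; lra).
  assert (2 * w t / (1 - w t) <= 4 * w t).
  { apply (Rmult_le_reg_r (1 - w t)); [lra|]. unfold Rdiv. rewrite Rmult_assoc, Rinv_l by lra. nra. }
  unfold FF. lra.
Qed.

Lemma FF0 : FF 0 = - p - 2 * ln (1 + w 0).
Proof.
  destruct (w_props 0 Hp) as [[Hw1 Hw2] Hw3].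
  assert (E : ln (1 - w 0) + ln (1 + w 0) = - p).
  { rewrite <- ln_mult by lra.
    replace ((1 - w 0) * (1 + w 0)) with (1 - w 0 * w 0) by ring. rewrite Hw3.
    replace (1 - (1 - exp (0 - p))) with (exp (- p)) by (replace (0 - p) with (-p) by ring; ring).
    apply ln_exp. }
  unfold FF. lra.
Qed.

Lemma Y_bounds : 1 - / SS <= w 0 /\ ln 2 - / SS <= ln (1 + w 0) <= ln 2.
Proof.
  destruct (w_props 0 Hp) as [[Hw1 Hw2] Hw3].
  assert (HSe : exp (0 - p) = / SS).
  { unfold SS. rewrite <- exp_Ropp. f_equal. ring. }
  assert (HY : 1 - w 0 <= / SS).
  { rewrite <- HSe. nra. }
  split; [lra|split].
  - assert (E : ln 2 - ln (1 + w 0) = ln (2 * / (1 + w 0))).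
    { rewrite ln_mult, ln_Rinv; try lra. apply Rinv_0_lt_compat; lra. }
    assert (ln (2 * / (1 + w 0)) <= 2 * / (1 + w 0) - 1).
    { apply ln_le_lin. apply Rmult_lt_0_compat; [lra|apply Rinv_0_lt_compat; lra]. }
    assert (2 * / (1 + w 0) - 1 = (1 - w 0) / (1 + w 0)) by (field; lra).
    assert ((1 - w 0) / (1 + w 0) <= 1 - w 0).
    { apply (Rmult_le_reg_r (1 + w 0)); [lra|]. unfold Rdiv. rewrite Rmult_assoc, Rinv_l by lra. nra. }
    lra.
  - apply ln_le; lra.
Qed.

Lemma Hu_y : forall y, p - 1/2 <= y < p -> Hu y <= / (SS * sS).
Proof.
  intros y Hy. destruct (w_props y (proj2 Hy)) as [[Hw1 Hw2] Hw3].
  pose proof (FF_nonpos y (proj2 Hy)). pose proof sS_pos. pose proof SS_pos.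
  assert (Hc1 : 0 < c1).
  { unfold c1. assert (0 < / sS) by (apply Rinv_0_lt_compat; lra).
    assert (0 <= (1 + p)^2 / (SS^2 * sS)).
    { apply Rmult_le_pos. apply pow2_ge_0. left; apply Rinv_0_lt_compat.
      assert (0 < SS^2) by (apply pow_lt; lra). nra. }
    lra. }
  pose proof (w_low y (proj2 Hy)).
  set (x := p - y) in *.
  assert (Hxw : x <= w y).
  { assert (Hx0 : 0 <= x <= 1/2) by (unfold x; lra).
    assert (x*x <= x*((1+x)*(w y * w y))) by (apply Rmult_le_compat_l; lra).
    assert (x * (1 + x) <= 1) by nra.
    assert (0 <= w y * w y) by nra.
    apply Rsqr_incr_0_var; [|lra]. unfold Rsqr. nra. }
  assert (Hxw2 : 2 * x / w y <= 2).
  { apply (Rmult_le_reg_r (w y)); [lra|]. unfold Rdiv. rewrite Rmult_assoc, Rinv_l by lra. lra. }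
  assert (Hb : - x^2 / 2 - 2 * w y * x - 4 * w y + 2 * x / w y <= 2).
  { assert (0 <= x^2) by apply pow2_ge_0. unfold x in *. nra. }
  assert (HK : 0 < / (2 * (SS * sS))) by (apply Rinv_0_lt_compat; nra).
  unfold Hu. fold x.
  assert (c1 * FF y <= 0) by nra.
  assert (/ (2 * (SS * sS)) * (- x^2 / 2 - 2 * w y * x - 4 * w y + 2 * x / w y) <= / (2 * (SS * sS)) * 2)
    by (apply Rmult_le_compat_l; lra).
  assert (/ (2 * (SS * sS)) * 2 = / (SS * sS)) by (field; nra).
  lra.
Qed.
Lemma inv_le_half : forall x, 2 <= x -> / x <= 1/2.
Proof. intros x Hx. replace (1/2) with (/ 2) by field. apply Rinv_le_contravar; lra. Qed.

Lemma Hu_0 : 1000 <= p -> - Hu 0 <= (p + 2 * ln 2) / sS + p^2 / (4 * (SS * sS)) + 3 / (SS * sS).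
Proof.
  intros Hbig. destruct (w_props 0 Hp) as [[Hw1 Hw2] Hw3].
  destruct Y_bounds as [HY1 [HY2 HY3]].
  pose proof sS_pos. pose proof SS_pos. pose proof sS2.
  destruct (SS_big Hbig) as [HS _]. pose proof (poly_facts p Hbig) as Hpf.
  assert (HL : ln 2 <= 1) by (pose proof (ln_le_lin 2); lra).
  assert (HL0 : 0 < ln 2) by (pose proof ln_lt_2; lra).
  set (Y := w 0) in *.
  set (M := p + 2 * ln (1 + Y)).
  assert (HM : 0 <= M <= p + 2 * ln 2) by (unfold M; split; [|lra]; assert (0 <= ln (1 + Y)) by (rewrite <- ln_1; apply ln_le; lra); lra).
  unfold Hu. rewrite FF0. fold Y. replace (p - 0) with p by ring.
  replace (- p - 2 * ln (1 + Y)) with (- M) by (unfold M; ring).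
  assert (Hc1M : c1 * M <= M / sS + / (SS * sS)).
  { unfold c1. rewrite Rmult_plus_distr_r.
    assert ((1 + p)^2 / (SS^2 * sS) * M <= / (SS * sS)).
    { assert ((1 + p)^2 * M <= SS).
      { assert (0 <= (1+p)^2) by apply pow2_ge_0.
        assert ((1 + p)^2 * M <= (1 + p)^2 * (p + 2)) by (apply Rmult_le_compat_l; lra). lra. }
      unfold Rdiv. replace ((1 + p) ^ 2 * / (SS ^ 2 * sS) * M) with ((1 + p) ^ 2 * M * / (SS ^ 2 * sS)) by ring.
      apply (Rmult_le_reg_r (SS ^ 2 * sS)). assert (0 < SS^2) by (apply pow_lt; lra). nra.
      rewrite Rmult_assoc, Rinv_l. replace (/ (SS * sS) * (SS ^ 2 * sS)) with SS by (field; lra). lra.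
      assert (0 < SS^2) by (apply pow_lt; lra). nra. }
    unfold Rdiv. lra. }
  assert (Hbr : - (- p^2 / 2 - 2 * Y * p - 4 * Y + 2 * p / Y) <= p^2/2 + 4).
  { assert (Y * p <= p / Y).
    { apply (Rmult_le_reg_r Y); [lra|]. unfold Rdiv. replace (p * / Y * Y) with p by (field; lra). assert (Y * Y <= 1) by nra. replace (Y * p * Y) with ((Y * Y) * p) by ring. nra. }
    lra. }
  assert (HK : 0 < / (2 * (SS * sS))) by (apply Rinv_0_lt_compat; nra).
  assert (/ (2 * (SS * sS)) * (- (- p^2 / 2 - 2 * Y * p - 4 * Y + 2 * p / Y)) <= / (2 * (SS * sS)) * (p^2/2 + 4))
    by (apply Rmult_le_compat_l; lra).
  assert (/ (2 * (SS * sS)) * (p^2/2 + 4) = p^2 / (4 * (SS * sS)) + 2 / (SS * sS)) by (field; nra).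
  assert (M / sS <= (p + 2 * ln 2) / sS).
  { unfold Rdiv. apply Rmult_le_compat_r; [left; apply Rinv_0_lt_compat; lra|lra]. }
  assert (/ (SS * sS) + 2 / (SS * sS) = 3 / (SS * sS)) by (field; nra).
  lra.
Qed.

Lemma pos_upper : 1000 <= p -> forall y, p - 1/2 <= y < p ->
  RInt g 0 y <= (p + 2 * ln 2) / sS + p^2 / (4 * (SS * sS)) + 4 / (SS * sS).
Proof.
  intros Hbig y Hy.
  pose proof (pos_up_int Hbig y ltac:(lra)). pose proof (Hu_y y Hy). pose proof (Hu_0 Hbig).
  pose proof sS_pos. pose proof SS_pos.
  assert (/ (SS * sS) + 3 / (SS * sS) = 4 / (SS * sS)) by (field; nra).
  lra.
Qed.

Lemma pos_lower : 1000 <= p -> let y := p - / (16 * SS^2) in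
  0 <= y < p /\ (p + 2 * ln 2) / sS + p^2 / (4 * (SS * sS)) - 4 / (SS * sS) <= RInt g 0 y.
Proof.
  intros Hbig y.
  pose proof sS_pos. pose proof SS_pos. pose proof sS2.
  destruct (SS_big Hbig) as [HS _]. pose proof (poly_facts p Hbig) as Hpf.
  assert (HSb : 1000000 <= SS) by lra.
  assert (Hx0 : 0 < / (16 * SS^2) <= 1/2).
  { split. apply Rinv_0_lt_compat; assert (0 < SS^2) by (apply pow_lt; lra); lra.
    apply inv_le_half. assert (SS <= SS^2) by (simpl; nra). lra. }
  assert (Hy : 0 <= y < p) by (unfold y; lra).
  split; auto.
  pose proof (pos_low_int y Hy) as H2.
  destruct (w_props y (proj2 Hy)) as [[Hw1 Hw2] Hw3].
  assert (Hwy : w y <= / (4 * SS)).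
  { assert (w y * w y <= / (16 * SS^2)).
    { rewrite Hw3. pose proof (exp_ge1 (y - p)). unfold y in *. lra. }
    apply Rsqr_incr_0_var; [|left; apply Rinv_0_lt_compat; lra]. unfold Rsqr.
    replace (/ (4 * SS) * / (4 * SS)) with (/ (16 * SS^2)) by (field; lra). lra. }
  assert (Hwy2 : w y <= 1/2).
  { eapply Rle_trans; [exact Hwy|]. apply inv_le_half. lra. }
  pose proof (FF_low y (proj2 Hy) Hwy2) as HFF.
  destruct Y_bounds as [HY1 [HY2 HY3]].
  unfold Hl in H2. rewrite FF0 in H2. replace (p - 0) with p in H2 by ring.
  replace (p - y) with (/ (16 * SS^2)) in H2 by (unfold y; ring).
  assert (Hinv : 0 < / sS) by (apply Rinv_0_lt_compat; lra).
  assert (T1 : / sS * FF y >= / sS * (- 4 * w y)) by (apply Rle_ge, Rmult_le_compat_l; lra).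
  assert (T2 : / sS * (- 4 * w y) >= - (1 / (SS * sS))).
  { assert (4 * w y <= / SS) by (replace (/ SS) with (4 * / (4 * SS)) by (field; lra); lra).
    assert (HH : / sS * (4 * w y) <= / sS * / SS) by (apply Rmult_le_compat_l; lra).
    replace (/ sS * / SS) with (1 / (SS * sS)) in HH by (field; lra). lra. }
  assert (T3 : / sS * (- (- p - 2 * ln (1 + w 0))) >= (p + 2 * ln 2) / sS - 2 / (SS * sS)).
  { assert (- (- p - 2 * ln (1 + w 0)) >= p + 2 * ln 2 - 2 / SS) by (unfold Rdiv; lra).
    assert (HH : / sS * (- (- p - 2 * ln (1 + w 0))) >= / sS * (p + 2 * ln 2 - 2 / SS))
      by (apply Rle_ge, Rmult_le_compat_l; lra).
    replace (/ sS * (p + 2 * ln 2 - 2 / SS)) with ((p + 2 * ln 2) / sS - 2 / (SS * sS)) in HH by (field; lra).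
    lra. }
  assert (T4 : (/ (16 * SS ^ 2)) ^ 2 / (4 * (SS * sS)) <= 1 / (SS * sS)).
  { assert ((/ (16 * SS ^ 2)) ^ 2 <= 1).
    { destruct Hx0 as [Ha1 Ha2].
      assert (HH: (/ (16 * SS ^ 2))^2 = / (16 * SS ^ 2) * / (16 * SS ^ 2)) by ring. rewrite HH. nra. }
    unfold Rdiv. assert (0 < / (4 * (SS * sS))) by (apply Rinv_0_lt_compat; nra).
    assert (/ (4 * (SS * sS)) <= / (SS * sS)) by (apply Rinv_le_contravar; nra).
    assert (0 <= (/ (16 * SS ^ 2)) ^ 2) by apply pow2_ge_0. nra. }
  assert (/ sS * FF y - (/ (16 * SS ^ 2)) ^ 2 / (4 * (SS * sS)) -
     (/ sS * (- p - 2 * ln (1 + w 0)) - p ^ 2 / (4 * (SS * sS))) =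
     / sS * FF y + / sS * (- (- p - 2 * ln (1 + w 0))) + p ^ 2 / (4 * (SS * sS)) - (/ (16 * SS ^ 2)) ^ 2 / (4 * (SS * sS))) by ring.
  assert (1 / (SS * sS) + 2 / (SS * sS) + 1 / (SS * sS) = 4 / (SS * sS)) by (field; nra).
  lra.
Qed.

Lemma q_le : q <= 1 - a.
Proof. assert (exp q < 1) by (rewrite <- exp_0; apply exp_increasing; lra). lra. Qed.

Lemma neg_lower : 1000 <= p -> let x0 := q + exp q in
  q < x0 <= 0 /\ 2 * sqrt a - / (SS * sS) <= RInt g x0 0.
Proof.
  intros Hbig x0.
  pose proof sS_pos. pose proof SS_pos. pose proof sS2.
  destruct (SS_big Hbig) as [HS [_ H8]]. pose proof (poly_facts p Hbig) as Hpf.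
  pose proof (exp_pos q). pose proof q_le. pose proof a_eq.
  assert (Hx0 : q < x0 <= 0).
  { unfold x0. split. lra. assert (exp q < 1) by (rewrite <- exp_0; apply exp_increasing; lra). lra. }
  split; auto.
  assert (HI := cmp_low x0 0 (fun t => 2 * sqrt (t - - a) / 1) (fun t => / sqrt ((t - - a) * (1 * 1)))
    ltac:(lra) ltac:(lra) ltac:(lra)).
  assert (HI' : 2 * sqrt (0 - - a) / 1 - 2 * sqrt (x0 - - a) / 1 <= RInt g x0 0).
  { apply HI.
    - intros t Ht. apply der_sqrt_lin; lra.
    - intros t Ht. apply g_ge_of. apply G_pos; lra.
      unfold Defs.f. pose proof (exp_pos t). lra. }
  replace (0 - - a) with a in HI' by ring.
  replace (x0 - - a) with (2 * exp q) in HI' by (unfold x0; lra).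
  assert (Hq3 : 8 * SS^3 * exp q <= 1).
  { assert (exp q <= exp (1 - (SS - p))) by (apply exp_mono; lra).
    assert (0 < SS^3) by (apply pow_lt; lra). nra. }
  assert (sqrt (2 * exp q) <= / (2 * (SS * sS))).
  { apply Rsqr_incr_0_var; [|left; apply Rinv_0_lt_compat; nra]. unfold Rsqr.
    rewrite sqrt_sqrt by lra.
    replace (/ (2 * (SS * sS)) * / (2 * (SS * sS))) with (/ (4 * SS^3)) by (rewrite H1; field; lra).
    apply (Rmult_le_reg_r (4 * SS^3)). assert (0 < SS^3) by (apply pow_lt; lra). lra.
    rewrite Rinv_l. lra. assert (0 < SS^3) by (apply pow_lt; lra). lra. }
  assert (2 * / (2 * (SS * sS)) = / (SS * sS)) by (field; nra).
  lra.
Qed.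

Lemma neg_upper : 1000 <= p -> forall x, q < x <= - a / 2 ->
  RInt g x 0 <= 2 * sqrt a + 33 / (SS * sS).
Proof.
  intros Hbig x Hx.
  pose proof sS_pos. pose proof SS_pos. pose proof sS2.
  destruct (SS_big Hbig) as [HS [H4 _]]. pose proof (poly_facts p Hbig) as Hpf.
  pose proof q_le. pose proof a_eq. pose proof q_ge.
  set (r := - a / 2) in *.
  assert (Hqr : q < r) by (unfold r; lra).
  assert (Hr0 : r < 0) by (unfold r; lra).
  assert (Hra : r = - a / 2) by reflexivity.
  rewrite (RInt_g_split x r 0) by lra.
  set (eps := exp r).
  assert (Heps0 : 0 < eps) by apply exp_pos.
  assert (Heps : 4 * SS^2 * eps <= 1) by (unfold eps, r; rewrite H3; replace (- (SS - p) / 2) with (- (SS - p) / 2) by ring; exact H4).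
  assert (HSS2 : 1000000 <= SS^2) by (simpl; nra).
  assert (Heps2 : eps <= 1/2) by nra.
  set (K := sqrt (1 - eps)).
  assert (HK : 0 < K) by (apply sqrt_lt_R0; lra).
  assert (HK2 : K * K = 1 - eps) by (apply sqrt_sqrt; lra).
  assert (PA : RInt g x r <= 2 * sqrt (r - q) / K).
  { eapply Rle_trans.
    - apply (cmp_up x r (fun t => 2 * sqrt (t - q) / K) (fun t => / sqrt ((t - q) * (K * K)))); try lra.
      + intros t Ht. apply der_sqrt_lin; lra.
      + intros t Ht. apply g_le_of. rewrite HK2; nra.
        rewrite HK2. eapply Rle_trans; [|apply Gneg; lra].
        apply Rmult_le_compat_l; [lra|].
        assert (exp t <= eps) by (apply exp_mono; lra). lra.
    - assert (0 <= 2 * sqrt (x - q) / K) by (apply Rmult_le_pos; [pose proof (sqrt_pos (x-q)); lra|left; apply Rinv_0_lt_compat; lra]).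
      lra. }
  set (sa := sqrt a).
  assert (Hsa : 0 < sa) by (apply sqrt_lt_R0; lra).
  assert (Hsa2 : sa * sa = a) by (apply sqrt_sqrt; lra).
  assert (Hsa3 : 0 < sa ^ 3) by (apply pow_lt; lra).
  assert (PB : RInt g r 0 <= 2 * sa - 2 * sqrt (a + r) + 4 / sa ^ 3).
  { eapply Rle_trans.
    - apply (cmp_up r 0 (fun t => 2 * sqrt (t - - a) / 1 + 4 * exp t / sa ^ 3)
                      (fun t => / sqrt ((t - - a) * (1 * 1)) + 4 * exp t / sa ^ 3)); try lra.
      + intros t Ht. apply (is_derive_plus (fun u => 2 * sqrt (u - - a) / 1) (fun u => 4 * exp u / sa ^ 3)).
        apply der_sqrt_lin; lra. auto_derive; auto. field. lra.
      + intros t Ht.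
        set (A := a + t). set (v := sqrt (a - Defs.f t)). set (u := sqrt A).
        assert (HG : 0 < a - Defs.f t) by (apply G_pos; lra).
        assert (HGa : a / 4 <= a - Defs.f t).
        { unfold Defs.f. assert (exp t <= 1) by (rewrite <- exp_0; apply exp_mono; lra). unfold r in Ht. lra. }
        assert (HGA : a - Defs.f t = A - exp t) by (unfold A, Defs.f; ring).
        assert (Hv : 0 < v) by (apply sqrt_lt_R0; lra).
        assert (Hv2 : v * v = a - Defs.f t) by (apply sqrt_sqrt; lra).
        assert (Hu2 : u * u = A) by (apply sqrt_sqrt; unfold A, r in *; lra).
        assert (Hu : 0 <= u) by apply sqrt_pos.
        assert (Hvu : v <= u).
        { apply Rsqr_incr_0_var; [|lra]. unfold Rsqr. rewrite Hv2, Hu2. pose proof (exp_pos t). lra. }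
        pose proof (alg3 u v Hv Hvu) as Ha3.
        rewrite Hu2, Hv2, HGA in Ha3. replace (A - (A - exp t)) with (exp t) in Ha3 by ring.
        assert (Hvs : sa / 2 <= v).
        { apply Rsqr_incr_0_var; [|lra]. unfold Rsqr. rewrite Hv2.
          replace (sa / 2 * (sa / 2)) with (sa * sa / 4) by field. lra. }
        assert (Hv3 : sa ^ 3 / 8 <= v ^ 3).
        { replace (sa ^ 3 / 8) with ((sa / 2)^3) by field. apply pow_incr; lra. }
        assert (exp t / (2 * v ^ 3) <= 4 * exp t / sa ^ 3).
        { replace (4 * exp t / sa ^ 3) with (exp t * / (sa ^ 3 / 4)) by (field; lra).
          unfold Rdiv. apply Rmult_le_compat_l. left; apply exp_pos.
          apply Rinv_le_contravar. lra. lra. }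
        unfold g. fold v.
        replace (/ sqrt ((t - - a) * (1 * 1))) with (/ u) by (unfold u, A; f_equal; f_equal; ring).
        lra.
    - replace (0 - - a) with a by ring. replace (r - - a) with (a + r) by ring. fold sa.
      rewrite exp_0. assert (0 < 4 * exp r / sa ^ 3) by (apply Rmult_lt_0_compat; [pose proof (exp_pos r); lra|apply Rinv_0_lt_compat; lra]).
      assert (4 * 1 / sa ^ 3 = 4 / sa ^ 3) by (field; lra). unfold Rdiv in *. lra. }
  assert (Har : 0 < a + r) by (unfold r; lra).
  set (b := sqrt (a + r)).
  assert (Hb : 0 < b) by (apply sqrt_lt_R0; lra).
  assert (Hbq : sqrt (r - q) <= b) by (apply sqrt_le_1_alt; lra).
  assert (HKi : / K <= 1 + eps).
  { apply (Rmult_le_reg_r K); [lra|]. rewrite Rinv_l by lra.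
    assert (1 <= (1 + eps) * (1 + eps) * (K * K)) by (rewrite HK2; nra).
    assert (K <= 1) by nra. nra. }
  assert (T1 : 2 * sqrt (r - q) / K - 2 * b <= 2 * b * eps).
  { assert (sqrt (r - q) / K <= b * (1 + eps)).
    { unfold Rdiv. assert (0 <= sqrt (r - q)) by apply sqrt_pos.
      assert (0 < / K) by (apply Rinv_0_lt_compat; lra).
      apply Rle_trans with (b * / K). apply Rmult_le_compat_r; lra. apply Rmult_le_compat_l; lra. }
    lra. }
  assert (Hbs : b <= sS).
  { apply Rsqr_incr_0_var; [|lra]. unfold Rsqr. unfold b. rewrite sqrt_sqrt by lra. rewrite <- H1. unfold r; lra. }
  assert (T2 : 2 * b * eps <= / (SS * sS)).
  { assert (2 * b * eps <= 2 * sS * eps) by nra.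
    assert (2 * sS * eps * (SS * sS) <= 1).
    { replace (2 * sS * eps * (SS * sS)) with (2 * SS ^ 2 * eps) by (rewrite H1; ring). nra. }
    apply (Rmult_le_reg_r (SS * sS)); [nra|]. rewrite Rinv_l by nra. nra. }
  assert (T3 : 4 / sa ^ 3 <= 32 / (SS * sS)).
  { assert (Hsas : sS / 2 <= sa).
    { apply Rsqr_incr_0_var; [|lra]. unfold Rsqr. rewrite Hsa2.
      replace (sS / 2 * (sS / 2)) with (sS * sS / 4) by field. rewrite <- H1. lra. }
    assert (sS ^ 3 / 8 <= sa ^ 3) by (replace (sS ^ 3 / 8) with ((sS / 2)^3) by field; apply pow_incr; lra).
    replace (32 / (SS * sS)) with (4 / (sS ^ 3 / 8)) by (rewrite H1; field; lra).
    unfold Rdiv. apply Rmult_le_compat_l. lra. apply Rinv_le_contravar.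
    assert (0 < sS^3) by (apply pow_lt; lra). lra. lra. }
  assert (/ (SS * sS) + 32 / (SS * sS) = 33 / (SS * sS)) by (field; nra).
  fold b in PB. lra.
Qed.

Lemma sa_bounds : 1000 <= p ->
  2 * sS - p / sS - p^2 / (4 * SS * sS) - p^3 / (4 * SS^2 * sS) <= 2 * sqrt a <=
  2 * sS - p / sS - p^2 / (4 * SS * sS).
Proof.
  intros Hbig. pose proof sS_pos. pose proof SS_pos. pose proof sS2. pose proof a_eq.
  destruct (SS_big Hbig) as [HS _]. pose proof (poly_facts p Hbig) as Hpf.
  apply sqrt_exp; auto. lra. apply sqrt_pos. rewrite sqrt_sqrt; lra.
Qed.

Lemma upper_total : 1000 <= p -> forall x y, q < x -> x <= y -> y < p ->
  RInt g x y <= 2 * sS + 2 * ln 2 / sS + 37 / (SS * sS).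
Proof.
  intros Hbig x y H1 H2 H3.
  pose proof sS_pos. pose proof SS_pos. pose proof sS2. pose proof a_eq.
  destruct (SS_big Hbig) as [HS _]. pose proof (poly_facts p Hbig) as Hpf.
  pose proof q_le.
  set (x' := Rmin x (- a / 2)). set (y' := Rmax y (p - 1/2)).
  assert (Hx' : q < x' <= - a / 2) by (unfold x'; split; [apply Rmin_glb_lt; lra|apply Rmin_r]).
  assert (Hy' : p - 1/2 <= y' < p) by (unfold y'; split; [apply Rmax_r|apply Rmax_lub_lt; lra]).
  assert (x' <= x) by apply Rmin_l. assert (y <= y') by apply Rmax_l.
  apply Rle_trans with (RInt g x' y'); [apply RInt_g_mono; lra|].
  rewrite (RInt_g_split x' 0 y') by lra.
  pose proof (neg_upper Hbig x' Hx'). pose proof (pos_upper Hbig y' Hy').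
  pose proof (sa_bounds Hbig).
  assert (E : (p + 2 * ln 2) / sS + p^2 / (4 * (SS * sS)) + 4 / (SS * sS) + 33 / (SS * sS)
     = p / sS + p^2 / (4 * SS * sS) + 2 * ln 2 / sS + 37 / (SS * sS)) by (field; nra).
  lra.
Qed.

Lemma lower_total : 1000 <= p -> exists x0 y0, q < x0 /\ x0 <= y0 /\ y0 < p /\
  2 * sS + 2 * ln 2 / sS - 6 / (SS * sS) <= RInt g x0 y0.
Proof.
  intros Hbig.
  pose proof sS_pos. pose proof SS_pos. pose proof sS2. pose proof a_eq.
  destruct (SS_big Hbig) as [HS _]. pose proof (poly_facts p Hbig) as Hpf.
  destruct (neg_lower Hbig) as [Hx0 Hn].
  destruct (pos_lower Hbig) as [Hy0 Hpo].
  set (x0 := q + exp q) in *. set (y0 := p - / (16 * SS^2)) in *.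
  exists x0, y0. split; [lra|split; [lra|split; [lra|]]].
  rewrite (RInt_g_split x0 0 y0) by lra.
  pose proof (sa_bounds Hbig).
  assert (T : p^3 / (4 * SS^2 * sS) <= 1 / (SS * sS)).
  { assert (p^3 <= SS) by lra.
    replace (1 / (SS * sS)) with (SS / (SS^2 * sS)) by (field; nra).
    unfold Rdiv. assert (0 < / (SS^2 * sS)) by (apply Rinv_0_lt_compat; assert (0 < SS^2) by (apply pow_lt; lra); nra).
    replace (/ (4 * SS ^ 2 * sS)) with (/ 4 * / (SS^2 * sS)) by (field; nra).
    assert (0 <= p^3) by (apply pow_le; lra). nra. }
  assert (E : (p + 2 * ln 2) / sS + p^2 / (4 * (SS * sS)) - 4 / (SS * sS) - / (SS * sS) - 1 / (SS * sS)
     = p / sS + p^2 / (4 * SS * sS) + 2 * ln 2 / sS - 6 / (SS * sS)) by (field; nra).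
  lra.
Qed.

Lemma main_sec : 1000 <= p -> phi_lo a = q -> phi_hi a = p ->
  Rabs (eps_of a) <= 172 / beta a ^ 2.
Proof.
  intros Hbig Hlo Hhi.
  destruct (beta_val Hlo Hhi (ex_intro _ (3 + 3 * sqrt (1 + a)) crude)) as (l & Hb & Hl1 & Hl2).
  pose proof sS_pos as H. pose proof SS_pos as H0. pose proof sS2 as H1. pose proof a_eq as H2.
  destruct (SS_big Hbig) as [HS _]. pose proof (poly_facts p Hbig) as Hpf.
  destruct (lower_total Hbig) as (x0 & y0 & G1 & G2 & G3 & G4).
  pose proof (Hl1 x0 y0 G1 G2 G3) as G5.
  pose proof (Hl2 _ (upper_total Hbig)) as G6.
  unfold eps_of. replace (beta a ^ 2 - ln (4 * beta a ^ 2) - a) with (beta a ^ 2 - ln (4 * beta a ^ 2) - (SS - p)) by (rewrite <- H2; reflexivity).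
  apply (fin_alg p SS sS (beta a)); auto. lra.
  rewrite Hb.
  assert (0 < 19 / (SS * sS) - 3 / (SS * sS)) by (unfold Rdiv; rewrite <- Rmult_minus_distr_r; apply Rmult_lt_0_compat; [lra|apply Rinv_0_lt_compat; nra]).
  assert (E1 : / 2 * (2 * sS + 2 * ln 2 / sS - 6 / (SS * sS)) = sS + ln 2 / sS - 3 / (SS * sS)) by (field; nra).
  assert (E2 : / 2 * (2 * sS + 2 * ln 2 / sS + 37 / (SS * sS)) = sS + ln 2 / sS + 37 / 2 / (SS * sS)) by (field; nra).
  assert (37 / 2 / (SS * sS) <= 19 / (SS * sS)) by (unfold Rdiv; assert (0 < / (SS * sS)) by (apply Rinv_0_lt_compat; nra); nra).
  split; lra.
Qed.

Lemma crude_beta : phi_lo a = q -> phi_hi a = p -> beta a <= (3 + 3 * sqrt (1 + a)) / 2.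
Proof.
  intros Hlo Hhi.
  destruct (beta_val Hlo Hhi (ex_intro _ (3 + 3 * sqrt (1 + a)) crude)) as (l & Hb & Hl1 & Hl2).
  pose proof (Hl2 _ crude). rewrite Hb. lra.
Qed.


End Main.

Lemma root_pos : forall f0, 1 < f0 -> exists x, 0 <= x /\ Defs.f x = f0.
Proof.
  intros f0 Hf0.
  set (h := fun x => exp x - x - f0).
  assert (Hc : continuity h) by (unfold h; reg).
  assert (H2 : 0 < h (2 * f0)).
  { unfold h. assert (E : exp (2 * f0) = exp f0 * exp f0) by (rewrite <- exp_plus; f_equal; ring).
    pose proof (exp_ge1 f0). nra. }
  destruct (IVT h 0 (2 * f0) Hc ltac:(lra) ltac:(unfold h; rewrite exp_0; lra) H2) as [z [Hz1 Hz2]].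
  exists z. split; [lra|]. unfold h in Hz2. unfold Defs.f. lra.
Qed.

Lemma root_neg : forall f0, 1 < f0 -> exists x, x <= 0 /\ Defs.f x = f0.
Proof.
  intros f0 Hf0.
  set (h := fun x => f0 - (exp x - x)).
  assert (Hc : continuity h) by (unfold h; reg).
  assert (H2 : 0 < h 0) by (unfold h; rewrite exp_0; lra).
  assert (H1 : h (- f0) < 0) by (unfold h; pose proof (exp_pos (- f0)); lra).
  destruct (IVT h (- f0) 0 Hc ltac:(lra) H1 H2) as [z [Hz1 Hz2]].
  exists z. split; [lra|]. unfold h in Hz2. unfold Defs.f. lra.
Qed.

Theorem proposition2p10 :
  exists C B : R, forall f0 : R, 1 < f0 -> B <= beta f0 ->
    Rabs (eps_of f0) <= C / beta f0 ^ 2.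
Proof.
  exists 172, ((3 + 3 * sqrt (1 + exp 1000)) / 2 + 1).
  intros f0 Hf0 HB.
  assert (Hp := epsilon_spec (inhabits 0) (fun p => 0 <= p /\ Defs.f p = f0) (root_pos f0 Hf0)).
  assert (Hq := epsilon_spec (inhabits 0) (fun p => p <= 0 /\ Defs.f p = f0) (root_neg f0 Hf0)).
  fold (phi_hi f0) in Hp. fold (phi_lo f0) in Hq.
  set (p := phi_hi f0) in *. set (q := phi_lo f0) in *.
  destruct Hp as [Hp1 Hp2]. destruct Hq as [Hq1 Hq2].
  unfold Defs.f in Hp2, Hq2.
  assert (Hp0 : 0 < p).
  { destruct Hp1 as [H|H]; auto. rewrite <- H in Hp2. rewrite exp_0 in Hp2. lra. }
  assert (Hq0 : q < 0).
  { destruct Hq1 as [H|H]; auto. rewrite H in Hq2. rewrite exp_0 in Hq2. lra. }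
  pose proof (crude_beta f0 p q Hf0 Hp0 Hq0 Hp2 Hq2 eq_refl eq_refl) as Hcr.
  assert (Hbig : 1000 <= p).
  { assert (sqrt (1 + exp 1000) < sqrt (1 + f0)) by lra.
    assert (exp 1000 < f0).
    { destruct (Rlt_le_dec (exp 1000) f0) as [H'|H']; auto.
      assert (sqrt (1 + f0) <= sqrt (1 + exp 1000)) by (apply sqrt_le_1_alt; lra). lra. }
    assert (exp 1000 < exp p) by lra.
    left. apply exp_lt_inv. auto. }
  apply (main_sec f0 p q Hf0 Hp0 Hq0 Hp2 Hq2 Hbig eq_refl eq_refl).
Qed.
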